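(* Let $\breve f\colon\{0,\dots,n\}\to\mathbb{Q}$ and $\breve g\colon\{0,\dots,m\}\to\mathbb{Q}$ be convex, $\breve h$ their min-plus convolution, and $\delta\ge0$. For each $k\in\{0,\dots,n+m\}$ let $(i^+_k,k-i^+_k)\in P^+_\delta$ and $(i^-_k,k-i^-_k)\in P^-_\delta$ be the points of these paths on diagonal $k$. Then the set $R_\delta$ of $\delta$-relevant points is exactly the set of points $(i,k-i)$ with $k\in\{0,\dots,n+m\}$ and $i^-_k\le i\le i^+_k$ (i.e., the points on or below $P^+_\delta$ and on or above $P^-_\delta$).
   Context: Convex means $F(i)-F(i-1)\le F(i+1)-F(i)$ for all interior $i$. $\breve h(k)=\min_{i+j=k}\breve f(i)+\breve g(j)$. A point is a pair $(i,j)\in\{0,\dots,n\}\times\{0,\dots,m\}$ on diagonal $i+j$; it is $\delta$-relevant if $\breve f(i)+\breve g(j)\le\breve h(i+j)+\delta$. $P^+_\delta$ (resp. $P^-_\delta$) is the set of points $(i,k-i)$, $k\in\{0,\dots,n+m\}$, where $i$ is maximal (resp. minimal) such that $(i,k-i)$ is a $\delta$-relevant point. *)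

(* Defs.v *)
From mathcomp Require Import all_boot all_order all_algebra.
Set Implicit Arguments. Unset Strict Implicit. Unset Printing Implicit Defensive.
Import Order.TTheory GRing.Theory Num.Theory.
Local Open Scope ring_scope.

(* A function F : {0..N} -> Q, represented as F : nat -> rat (values beyond N
   are irrelevant), is convex if F(i)-F(i-1) <= F(i+1)-F(i) for 0 < i < N. *)
Definition convex_on (N : nat) (F : nat -> rat) : Prop :=
  forall i : nat, (0 < i)%N -> (i < N)%N -> F i - F i.-1 <= F i.+1 - F i.

Definition valid_point (n m k i : nat) : bool :=
  [&& (i <= k)%N, (i <= n)%N & (k - i <= m)%N].

(* min-plus convolution h(k) = min_{i+j=k, i<=n, j<=m} f(i) + g(j), for k <= n+m.
   The seed value corresponds to the valid point (k - minn k m, minn k m). *)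
Definition minplus_conv (n m : nat) (f g : nat -> rat) (k : nat) : rat :=
  \big[Num.min/(f (k - minn k m)%N + g (minn k m))]_(i < n.+1 | valid_point n m k i)
     (f i + g (k - i)%N).

Definition relevant (n m : nat) (f g : nat -> rat) (delta : rat) (k i : nat) : Prop :=
  valid_point n m k i /\ f i + g (k - i)%N <= minplus_conv n m f g k + delta.

(* i is maximal (resp. minimal) such that (i, k-i) is delta-relevant:
   this is the point of P^+_delta (resp. P^-_delta) on diagonal k. *)
Definition is_Pplus (n m : nat) (f g : nat -> rat) (delta : rat) (k i : nat) : Prop :=
  relevant n m f g delta k i /\ forall i', relevant n m f g delta k i' -> (i' <= i)%N.
Definition is_Pminus (n m : nat) (f g : nat -> rat) (delta : rat) (k i : nat) : Prop :=
  relevant n m f g delta k i /\ forall i', relevant n m f g delta k i' -> (i <= i')%N.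

(* Main.v *)
Require Import Defs.
From mathcomp Require Import all_boot all_order all_algebra.
From mathcomp Require Import zify lra.
Import Order.TTheory GRing.Theory Num.Theory.
Local Open Scope ring_scope.

Lemma aux_dummy : True. Proof. by []. Qed.
Section Gen.
Variables (phi : nat -> rat) (lo hi : nat).
Let d j := phi j.+1 - phi j.
Hypothesis dmono : forall j, (lo <= j)%N -> (j.+2 <= hi)%N -> d j <= d j.+1.

Lemma dM j l : (lo <= j)%N -> (j <= l)%N -> (l.+1 <= hi)%N -> d j <= d l.
Proof.
move=> hj; elim: l => [|l IH] jl lh.
  by have -> : j = 0%N by lia.
case: (leqP j l) => H.
  apply: le_trans (IH H ltac:(lia)) _; apply: dmono; lia.
by have -> : j = l.+1 by lia.
Qed.

Lemma upA i y : (lo <= i)%N -> (i <= y)%N -> (y <= hi)%N -> 0 <= d i -> phi i <= phi y.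
Proof.
move=> hi0; elim: y => [|y IH] iy yh di.
  by have -> : i = 0%N by lia.
case: (leqP i y) => H.
  have := dM i y hi0 H yh; rewrite /d => h1.
  have := IH H ltac:(lia) di; rewrite /d in di; lra.
by have -> : i = y.+1 by lia.
Qed.

Lemma downB i x : (lo <= x)%N -> (x <= i)%N -> (i.+1 <= hi)%N -> d i < 0 -> phi i <= phi x.
Proof.
move=> lx xi ih di.
suff: forall c, (c <= i - x)%N -> phi i <= phi (i - c).
  by move/(_ (i - x)%N (leqnn _)); have -> : (i - (i - x) = x)%N by lia.
elim=> [|c IH] hc; first by rewrite subn0.
have h1 := IH ltac:(lia).
have h2 := dM (i - c.+1)%N i ltac:(lia) ltac:(lia) ih.
rewrite /d in h2 di.
have e : (i - c.+1).+1 = (i - c)%N by lia.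
rewrite e in h2.
lra.
Qed.

Lemma convmax x i y : (lo <= x)%N -> (x <= i)%N -> (i <= y)%N -> (y <= hi)%N ->
  phi i <= Num.max (phi x) (phi y).
Proof.
move=> lx xi iy yh.
case: (leqP y i) => H.
  have -> : i = y by lia.
  by rewrite le_max lexx orbT.
case: (lerP 0 (d i)) => D.
  by rewrite le_max (upA i y _ iy yh D) ?orbT //; lia.
by rewrite le_max (downB i x lx xi _ D) //; lia.
Qed.
End Gen.

Theorem mainTheorem13 (n m : nat) (f g : nat -> rat) (delta : rat)
  (ip im : nat -> nat) :
  convex_on n f -> convex_on m g -> 0 <= delta ->
  (forall k, (k <= n + m)%N -> is_Pplus n m f g delta k (ip k)) ->
  (forall k, (k <= n + m)%N -> is_Pminus n m f g delta k (im k)) ->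
  forall k i : nat,
    relevant n m f g delta k i <->
    [/\ (k <= n + m)%N, valid_point n m k i & (im k <= i <= ip k)%N].
Proof.
move=> cf cg d0 Hp Hm k i; split.
  move=> R; have [V _] := R.
  have kb : (k <= n + m)%N by move: V; rewrite /valid_point; lia.
  split => //; apply/andP; split.
    by apply: (Hm k kb).2.
  by apply: (Hp k kb).2.
case=> kb V /andP[h1 h2]; split => //.
have [[Vp Rp] _] := Hp k kb.
have [[Vm Rm] _] := Hm k kb.
move: V Vp Vm; rewrite /valid_point => V Vp Vm.
pose phi j := f j + g (k - j)%N.
have DM : forall j, (k - m <= j)%N -> (j.+2 <= minn k n)%N ->
    phi j.+1 - phi j <= phi j.+2 - phi j.+1.
  move=> j hj hj2; rewrite /phi.
  have F := cf j.+1 ltac:(lia) ltac:(lia).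
  have G := cg (k - j.+1)%N ltac:(lia) ltac:(lia).
  have e1 : (k - j.+1).-1 = (k - j.+2)%N by lia.
  have e2 : (k - j.+1).+1 = (k - j)%N by lia.
  rewrite e1 e2 /= in G; rewrite /= in F.
  move: F G; move: (f j) (f j.+1) (f j.+2) (g (k - j)%N) (g (k - j.+1)%N) (g (k - j.+2)%N).
  clear; move=> a b c x y z F G; lra.
have := @convmax phi (k - m)%N (minn k n) DM (im k) i (ip k) ltac:(lia) h1 h2 ltac:(lia).
rewrite le_max /phi => /orP[] H; apply: le_trans H _; [exact Rm | exact Rp].
Qed.
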